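(* Let $G$ be a (not necessarily connected) graph on $n\ge1$ vertices with adjacency matrix $A$ and let $m\ge1$. Then there exist $\mu\in\mathbb{R}$, $f\in\mathbb{R}^m$, $g\in\mathbb{R}^n$ such that, with $\alpha=-2m$, \[ (J_m+\alpha I)f=\tfrac{\mu}{2}\mathbf 1,\quad (A-J_n-\alpha I)g=-\tfrac{\mu}{2}\mathbf 1,\quad \langle f,f\rangle+\langle g,g\rangle=1,\quad \langle\mathbf 1,f\rangle+\langle\mathbf 1,g\rangle=0, \] if and only if $-2m$ is an eigenvalue of $A$.
   Context: $J_k$ is the $k\times k$ all-ones matrix, $\mathbf 1$ the all-ones vector of the appropriate size, $I$ the identity. *)

(* Defs.v *)
From HB Require Import structures.
From mathcomp Require Import all_boot all_order all_algebra.
From mathcomp Require Import reals.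
Set Implicit Arguments. Unset Strict Implicit. Unset Printing Implicit Defensive.
Import Order.TTheory GRing.Theory Num.Theory.
Local Open Scope ring_scope.

Definition simple_graph (n : nat) (e : rel 'I_n) : Prop :=
  symmetric e /\ irreflexive e.

Definition adjmx (R : nzRingType) (n : nat) (e : rel 'I_n) : 'M[R]_n :=
  \matrix_(i, j) (e i j)%:R.

Definition Jmx (R : nzRingType) (k : nat) : 'M[R]_k := const_mx 1.
Definition ones (R : nzRingType) (k : nat) : 'cV[R]_k := const_mx 1.

Definition dotc (R : nzRingType) (k : nat) (u v : 'cV[R]_k) : R :=
  \sum_(i < k) u i 0 * v i 0.

(* Main.v *)
Require Import Defs.
From HB Require Import structures.
From mathcomp Require Import all_boot all_order all_algebra.
From mathcomp Require Import reals.
From mathcomp Require Import ring lra.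
Import Order.TTheory GRing.Theory Num.Theory.
Local Open Scope ring_scope.

Section H.
Variable R : realType.

Lemma mulJ k (v : 'cV[R]_k) : Jmx R k *m v = dotc (ones R k) v *: ones R k.
Proof.
apply/matrixP => i j; rewrite !mxE mulr1 /dotc; rewrite (ord1 j).
by apply: eq_bigr => l _; rewrite !mxE.
Qed.

Lemma dotZr k a (u v : 'cV[R]_k) : dotc u (a *: v) = a * dotc u v.
Proof.
rewrite /dotc mulr_sumr; apply: eq_bigr => l _; rewrite !mxE; ring.
Qed.

Lemma dotZl k a (u v : 'cV[R]_k) : dotc (a *: u) v = a * dotc u v.
Proof.
rewrite /dotc mulr_sumr; apply: eq_bigr => l _; rewrite !mxE; ring.
Qed.

Lemma dotDr k (u v w : 'cV[R]_k) : dotc u (v + w) = dotc u v + dotc u w.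
Proof.
rewrite /dotc -big_split; apply: eq_bigr => l _; by rewrite !mxE mulrDr.
Qed.

Lemma dotBr k (u v w : 'cV[R]_k) : dotc u (v - w) = dotc u v - dotc u w.
Proof.
rewrite /dotc -sumrB; apply: eq_bigr => l _; by rewrite !mxE mulrBr.
Qed.

Lemma dot11 k : dotc (ones R k) (ones R k) = k%:R.
Proof.
rewrite /dotc (eq_bigr (fun _ => 1)) ?sumr_const ?card_ord //.
by move=> l _; rewrite !mxE mulr1.
Qed.

Lemma dot_ge0 k (u : 'cV[R]_k) : 0 <= dotc u u.
Proof. by apply: sumr_ge0 => i _; rewrite -expr2 sqr_ge0. Qed.

Lemma dot_eq0 k (u : 'cV[R]_k) : dotc u u = 0 -> u = 0.
Proof.
move=> H; apply/matrixP => i j; rewrite (ord1 j) mxE.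
have P0 : forall l : 'I_k, true -> 0 <= u l 0 * u l 0 by move=> l _; rewrite -expr2 sqr_ge0.
have := @psumr_eq0P R _ _ (fun i => u i 0 * u i 0) P0 H i isT.
by move/eqP; rewrite mulf_eq0 orbb => /eqP.
Qed.

End H.

Theorem lemma3p5 (R : realType) (n m : nat) (e : rel 'I_n) :
  simple_graph e -> (0 < n)%N -> (0 < m)%N ->
  let A : 'M[R]_n := adjmx R e in
  let alpha : R := - (2 * m)%:R in
  (exists (mu : R) (f : 'cV[R]_m) (g : 'cV[R]_n),
      [/\ (Jmx R m + alpha%:M) *m f = (mu / 2) *: ones R m,
          (A - Jmx R n - alpha%:M) *m g = - (mu / 2) *: ones R n,
          dotc f f + dotc g g = 1
        & dotc (ones R m) f + dotc (ones R n) g = 0])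
  <-> eigenvalue A alpha.
Proof.
move=> [esym eirr] n0 m0 A alpha.
have mR : (m%:R : R) != 0 by rewrite pnatr_eq0 -lt0n.
have alpha0 : alpha != 0 by rewrite /alpha oppr_eq0 natrM mulf_eq0 negb_or mR pnatr_eq0.
have AT : A^T = A by apply/matrixP => i j; rewrite !mxE esym.
split.
- move=> [mu [f [g [E1 E2 E3 E4]]]].
  rewrite mulmxDl mulJ mul_scalar_mx in E1.
  rewrite !mulmxBl mulJ mul_scalar_mx in E2.
  set sf := dotc (ones R m) f in E1 E4.
  set sg := dotc (ones R n) g in E2 E4.
  have H1 := congr1 (dotc (ones R m)) E1.
  rewrite dotDr !dotZr dot11 -/sf in H1.
  have H2 : (sf + mu/2) * m%:R = 0.
    have -> : (sf + mu/2) * m%:R = -(sf * m%:R + alpha * sf - mu/2 * m%:R)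
      by rewrite /alpha natrM; ring.
    by rewrite H1 subrr oppr0.
  have Hsf : sf = - (mu/2).
    move/eqP: H2; rewrite mulf_eq0 (negbTE mR) orbF addr_eq0 => /eqP //.
  have Hsg : sg = mu/2 by move: E4; rewrite Hsf; lra.
  have Ag : A *m g = alpha *: g.
    apply/eqP; rewrite -subr_eq0.
    have -> : A *m g - alpha *: g = (A *m g - sg *: ones R n - alpha *: g) + sg *: ones R n
      by rewrite [A *m g - _ - _]addrAC subrK.
    by rewrite E2 Hsg scaleNr addNr.
  have [g0|gnz] := eqVneq g 0.
    exfalso.
    have sg0 : sg = 0 by rewrite /sg g0 /dotc big1 // => i _; rewrite !mxE mulr0.
    have f0 : f = 0.
      move: E1; rewrite Hsf -Hsg sg0 oppr0 scale0r add0r => /eqP.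
      by rewrite scaler_eq0 (negbTE alpha0) /= => /eqP.
    move: E3; rewrite f0 g0 /dotc !big1 // ?addr0 => [/eqP|i _|i _]; last 2 first.
    - by rewrite !mxE mul0r.
    - by rewrite !mxE mul0r.
    by rewrite eq_sym oner_eq0.
  apply/eigenvalueP; exists g^T.
    by rewrite -{1}AT -trmx_mul Ag linearZ.
  by apply: contra gnz => /eqP h; rewrite -[g]trmxK h trmx0.
- move/eigenvalueP => [v Hv vnz].
  set g0 := v^T.
  have Ag0 : A *m g0 = alpha *: g0 by rewrite /g0 -{1}AT -trmx_mul Hv linearZ.
  have g0nz : g0 != 0 by apply: contra vnz => /eqP h; rewrite -[v]trmxK -/g0 h trmx0.
  set s := dotc (ones R n) g0.
  set d := dotc g0 g0.
  have dpos : 0 < d by rewrite lt_def dot_ge0 andbT; apply: contra g0nz => /eqP /dot_eq0 ->.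
  pose N := m%:R * (s / m%:R) ^+ 2 + d.
  have Npos : 0 < N by apply: ltr_wpDl => //; apply: mulr_ge0 => //; apply: sqr_ge0.
  pose t := (Num.sqrt N)^-1.
  have tN : t ^+ 2 * N = 1 by rewrite /t exprVn sqr_sqrtr ?ltW // mulVf // gt_eqF.
  exists (2 * t * s), ((- (t * s) / m%:R) *: ones R m), (t *: g0).
  split.
  - rewrite mulmxDl mulJ mul_scalar_mx dotZr dot11 scalerA -scalerDl.
    congr (_ *: _); rewrite /alpha natrM; field; exact: mR.
  - rewrite !mulmxBl mulJ mul_scalar_mx -scalemxAr Ag0 dotZr -/s !scalerA [t * alpha]mulrC.
    rewrite addrAC subrr add0r -scaleNr; congr (_ *: _); field => //.
  - rewrite !dotZl !dotZr dot11 -/d; rewrite -[RHS]tN /N; field; exact: mR.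
  - rewrite !dotZr dot11 -/s; field; exact: mR.
Qed.
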